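(* Let $0<m<L$, $\alpha>0$, and $\rho \ge \rho_\mathrm{GD}:=\max(1-\alpha m,\ \alpha L-1)$. Let \[ M=\begin{bmatrix} -2Lm\, I & (L+m)I\\ (L+m)I & -2I\end{bmatrix}\in\mathbb{R}^{2n\times 2n}. \] Then $(I,-\alpha I, M)$ is $\rho$-hyperstable, i.e. there exists $c>0$ such that $|x(k)|\le c\rho^k|x(0)|$ for all $k\ge0$ whenever the sequences $x(k),u(k)\in\mathbb{R}^n$ satisfy $x(k+1)=x(k)-\alpha u(k)$ for all $k$ and \[ \sum_{k=0}^N\rho^{-2k}\langle L x(k)-u(k),\ u(k)-m x(k)\rangle\ \ge\ 0 \quad\text{for all } N\ge0. \]
   Context: Here $M$ is the sector-IQC matrix obtained from the general construction $M=\begin{bmatrix}-2LmC^*C&(L+m)C^*\\(L+m)C&-2I\end{bmatrix}$ with $C=I$; the quadratic constraint associated with $M$ is $2\sum_k\rho^{-2k}\langle Lx(k)-u(k),u(k)-mx(k)\rangle\ge0$. *)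

(* Defs.v *)
From mathcomp Require Import all_boot all_order all_algebra.
Set Implicit Arguments. Unset Strict Implicit. Unset Printing Implicit Defensive.
Import Order.TTheory GRing.Theory Num.Theory.
Local Open Scope ring_scope.

Definition vdot (R : rcfType) (n : nat) (x y : 'cV[R]_n) : R :=
  \sum_(i < n) x i 0 * y i 0.

Definition vnorm (R : rcfType) (n : nat) (x : 'cV[R]_n) : R :=
  Num.sqrt (vdot x x).

Definition rho_GD (R : rcfType) (m L alpha : R) : R :=
  Num.max (1 - alpha * m) (alpha * L - 1).

(* Sector-IQC constraint (with C = I), up to the positive factor 2:
   for all N, sum_{k=0}^N rho^{-2k} <L x(k) - u(k), u(k) - m x(k)> >= 0. *)
Definition sector_iqc (R : rcfType) (n : nat) (m L rho : R)
  (x u : nat -> 'cV[R]_n) : Prop :=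
  forall N : nat,
    0 <= \sum_(0 <= k < N.+1)
           rho ^- (2 * k)%N * vdot (L *: x k - u k) (u k - m *: x k).

Definition hyperstable_GD (R : rcfType) (n : nat) (m L alpha rho : R) : Prop :=
  exists c : R, 0 < c /\
    forall x u : nat -> 'cV[R]_n,
      (forall k, x k.+1 = x k - alpha *: u k) ->
      sector_iqc m L rho x u ->
      forall k, vnorm (x k) <= c * rho ^+ k * vnorm (x 0%N).

(* Main.v *)
Require Import Defs.
From mathcomp Require Import all_boot all_order all_algebra.
From mathcomp Require Import ring lra.
Import Order.TTheory GRing.Theory Num.Theory.
Local Open Scope ring_scope.

Lemma scal (R : rcfType) (m L alpha rho : R) :
  0 < m -> m < L -> 0 < alpha -> Num.max (1 - alpha * m) (alpha * L - 1) <= rho ->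
  exists lam : R, 0 <= lam /\ forall a b : R,
    (a - alpha * b) ^+ 2 + lam * ((L * a - b) * (b - m * a)) <= rho ^+ 2 * a ^+ 2.
Proof.
move=> hm hmL ha; rewrite ge_max => /andP[h1 h2].
have hLm : 0 < L - m by rewrite subr_gt0.
case: (lerP (alpha * (L + m)) 2) => hc.
- exists (2 * alpha * (1 - alpha * m) / (L - m)).
  have r0 : 0 <= 1 - alpha * m by nra.
  have hl : alpha ^+ 2 <= 2 * alpha * (1 - alpha * m) / (L - m).
    rewrite ler_pdivlMr //; nra.
  split; first by apply: le_trans hl; exact: sqr_ge0.
  move=> a b; set lam := _ / _ in hl *.
  have E : (a - alpha * b) ^+ 2 + lam * ((L * a - b) * (b - m * a)) =
     (1 - alpha * m) ^+ 2 * a ^+ 2 - (lam - alpha ^+ 2) * (b - m * a) ^+ 2.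
    rewrite /lam; field; by rewrite lt0r_neq0.
  rewrite E.
  have : (1 - alpha * m) ^+ 2 <= rho ^+ 2 by rewrite ler_sqr ?nnegrE //; lra.
  have : 0 <= (lam - alpha ^+ 2) * (b - m * a) ^+ 2 by rewrite mulr_ge0 ?sqr_ge0 ?subr_ge0.
  have := sqr_ge0 a; nra.
- exists (2 * alpha * (alpha * L - 1) / (L - m)).
  have r0 : 0 <= alpha * L - 1 by nra.
  have hl : alpha ^+ 2 <= 2 * alpha * (alpha * L - 1) / (L - m).
    rewrite ler_pdivlMr //; nra.
  split; first by apply: le_trans hl; exact: sqr_ge0.
  move=> a b; set lam := _ / _ in hl *.
  have E : (a - alpha * b) ^+ 2 + lam * ((L * a - b) * (b - m * a)) =
     (alpha * L - 1) ^+ 2 * a ^+ 2 - (lam - alpha ^+ 2) * (b - L * a) ^+ 2.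
    rewrite /lam; field; by rewrite lt0r_neq0.
  rewrite E.
  have : (alpha * L - 1) ^+ 2 <= rho ^+ 2 by rewrite ler_sqr ?nnegrE //; lra.
  have : 0 <= (lam - alpha ^+ 2) * (b - L * a) ^+ 2 by rewrite mulr_ge0 ?sqr_ge0 ?subr_ge0.
  have := sqr_ge0 a; nra.
Qed.

Theorem lemma2p8 (R : rcfType) (n : nat) (m L alpha rho : R) :
  0 < m -> m < L -> 0 < alpha -> rho_GD m L alpha <= rho ->
  hyperstable_GD n m L alpha rho.
Proof.
move=> hm hmL ha hr.
have [lam [hlam key]] := @scal R m L alpha rho hm hmL ha hr.
have rpos : 0 < rho.
  move: hr; rewrite /rho_GD ge_max => /andP[h1 h2]; nra.
exists 1; split => // x u hx hiqc.
pose D k := vdot (x k) (x k).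
pose S k := vdot (L *: x k - u k) (u k - m *: x k).
have D0 k : 0 <= D k by rewrite /D /vdot; apply: sumr_ge0 => i _; rewrite -expr2 sqr_ge0.
have step k : D k.+1 + lam * S k <= rho ^+ 2 * D k.
  rewrite /D /S /vdot hx mulr_sumr mulr_sumr -big_split /=.
  apply: ler_sum => i _; rewrite !mxE -!expr2.
  have := key (x k i 0) (u k i 0); by [].
have inv k : 0 < rho ^+ k by rewrite exprn_gt0.
have claim N : rho ^- (2 * N) * D N +
    lam / rho ^+ 2 * \sum_(0 <= k < N) rho ^- (2 * k)%N * S k <= D 0%N.
  elim: N => [|N IH]; first by rewrite big_geq // mulr0 addr0 muln0 expr0 invr1 mul1r.
  rewrite big_nat_recr //= mulrDr.
  have e1 : rho ^- (2 * N.+1) = rho ^- (2 * N) / rho ^+ 2.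
    by rewrite mulnS exprD invfM mulrC.
  have H : rho ^- (2 * N.+1) * D N.+1 + lam / rho ^+ 2 * (rho ^- (2 * N) * S N)
      <= rho ^- (2 * N) * D N.
    rewrite e1; set t := rho ^- (2 * N).
    have tpos : 0 < t / rho ^+ 2 by rewrite divr_gt0 ?invr_gt0.
    have h := step N; rewrite -(ler_pM2l tpos) in h.
    have E1 : t / rho ^+ 2 * D N.+1 + lam / rho ^+ 2 * (t * S N)
       = t / rho ^+ 2 * (D N.+1 + lam * S N) by ring.
    have E2 : t / rho ^+ 2 * (rho ^+ 2 * D N) = t * D N.
      by field; exact: lt0r_neq0.
    by rewrite E1 -E2.
  move: IH H; set a := rho ^- (2 * N) * D N; set b := lam / rho ^+ 2 * _.
  set c := rho ^- (2 * N.+1) * D N.+1; set d := lam / rho ^+ 2 * _.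
  move=> IH H; lra.
move=> k; rewrite mul1r /vnorm.
have hk : D k <= rho ^+ (2 * k) * D 0%N.
  have := claim k.
  have : 0 <= lam / rho ^+ 2 * \sum_(0 <= j < k) rho ^- (2 * j)%N * S j.
    apply: mulr_ge0; first by rewrite divr_ge0 // exprn_ge0 // ltW.
    case: k => [|k]; first by rewrite big_geq.
    exact: hiqc.
  move=> h1 h2.
  have h3 : rho ^- (2 * k) * D k <= D 0%N by apply: le_trans h2; rewrite lerDl.
  by rewrite -ler_pdivrMl ?inv // mulrC.
rewrite -[rho ^+ k]ger0_norm; last by rewrite exprn_ge0 // ltW.
rewrite -sqrtr_sqr -sqrtrM ?sqr_ge0 //.
by apply: ler_wsqrtr; rewrite -exprM mulnC.
Qed.
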